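(* Consider the network-preserving differential algebraic model \[ \dot\theta_G=\omega_G,\qquad M\dot\omega_G=-A\omega_G-B_G\Gamma\sin(B^T\theta)+u,\qquad 0=-B_L\Gamma\sin(B^T\theta)+p^\ast, \] with $\theta=\begin{bmatrix}\theta_G^T & \theta_L^T\end{bmatrix}^T$, and the reduced ordinary differential model \[ \dot\eta=B_S^T(\eta)\,\omega_G,\qquad M\dot\omega_G=-A\omega_G-B_G\Gamma\sin(\eta)+u, \] with state $(\eta,\omega_G)\in\operatorname{im}B^T\times\mathbb{R}^{n_g}$. For given $u$ and $p^\ast$: (i) Let $(\theta_G,\theta_L,\omega_G)$ be a solution of the differential algebraic model on $\mathcal{I}=[0,T)$ with $B^T\theta(t)\in\Omega$ for all $t\in\mathcal{I}$. Then $(\eta,\omega_G)$ with $\eta=B^T\theta$ is a solution of the reduced model on $\mathcal{I}$. (ii) Let $(\eta,\omega_G)$ be a solution of the reduced model on $\mathcal{I}=[0,T)$, and assume $\eta(0)$ is a compatible initial condition, i.e. $\eta(0)\in\{v\in\operatorname{im}B^T \mid 0=p^\ast-B_L\Gamma\sin(v)\}$. Then there exists $\theta=\begin{bmatrix}\theta_G^T & \theta_L^T\end{bmatrix}^T$ with $B^T\theta=\eta$ such that $(\theta_G,\theta_L,\omega_G)$ is a solution of the differential algebraic model on $\mathcal{I}$.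
   Context: A power network is modeled on a connected undirected graph with $n$ nodes and $m$ edges; the nodes are partitioned into $n_g$ generator nodes and $n_\ell$ load nodes. $B\in\mathbb{R}^{n\times m}$ is an incidence matrix, partitioned row-wise as $B=\begin{bmatrix}B_G^T & B_L^T\end{bmatrix}^T$ (generator rows $B_G$, load rows $B_L$). $\Gamma=\mathrm{diag}(\gamma_k)$ is positive definite ($\gamma_k=X_{ij}^{-1}V_iV_j$ for edge $k=\{i,j\}$), $M$ and $A$ are positive definite diagonal matrices, $u\in\mathbb{R}^{n_g}$ is the generation input and $p^\ast\in\mathbb{R}^{n_\ell}$ is a constant vector of load powers. $\sin$ and $\cos$ act elementwise, $[\cos(\eta)]=\mathrm{diag}(\cos(\eta_k))$, $\Omega=(-\frac{\pi}{2},\frac{\pi}{2})^m$, $\Gamma'(\eta)=\Gamma[\cos(\eta)]$, and the (state-dependent) projected incidence matrix is $B_S(\eta)=B_G\big(I-\Gamma'(\eta)B_L^T(B_L\Gamma'(\eta)B_L^T)^{-1}B_L\big)$. *)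

(* Defs.v *)
From HB Require Import structures.
From mathcomp Require Import all_boot all_order all_algebra.
From mathcomp Require Import all_classical all_reals all_analysis.
Set Implicit Arguments. Unset Strict Implicit. Unset Printing Implicit Defensive.
Import Order.TTheory GRing.Theory Num.Theory.
Import numFieldNormedType.Exports.
Local Open Scope classical_set_scope.
Local Open Scope ring_scope.

Section Defs.
Variable R : realType.

Definition in_I (T : \bar R) (t : R) : Prop := 0 <= t /\ (t%:E < T)%E.

(* f' is the derivative of f on I = [0,T) (relative to I: one-sided at 0) *)
Definition has_deriv_on (n : nat) (T : \bar R) (f f' : R -> 'cV[R]_n) : Prop :=
  forall t, in_I T t ->
    (fun h : R => h^-1 *: (f (t + h) - f t))
      @ within (fun h : R => in_I T (t + h)) 0^' --> f' t.

Definition incidence (n m : nat) (B : 'M[R]_(n, m)) : Prop :=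
  forall k : 'I_m, exists i j : 'I_n,
    [/\ i != j, B i k = 1, B j k = -1 & forall l, l != i -> l != j -> B l k = 0].

Definition inc_adj (n m : nat) (B : 'M[R]_(n, m)) : rel 'I_n :=
  fun i j => [exists k, (B i k != 0) && (B j k != 0)].

Definition inc_connected (n m : nat) (B : 'M[R]_(n, m)) : Prop :=
  forall i j : 'I_n, connect (inc_adj B) i j.

Definition in_Omega (m : nat) (x : 'cV[R]_m) : Prop :=
  forall k : 'I_m, - (pi / 2) < x k 0 < pi / 2.

Definition sinv (m : nat) (x : 'cV[R]_m) : 'cV[R]_m := map_mx sin x.

Definition Gammap (m : nat) (gamma : 'rV[R]_m) (eta : 'cV[R]_m) : 'M[R]_m :=
  diag_mx gamma *m diag_mx (map_mx cos eta)^T.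

Definition Lmat (nl m : nat) (BL : 'M[R]_(nl, m)) gamma (eta : 'cV[R]_m) :=
  BL *m Gammap gamma eta *m BL^T.

Definition BS (ng nl m : nat) (B : 'M[R]_(ng + nl, m)) gamma (eta : 'cV[R]_m)
  : 'M[R]_(ng, m) :=
  usubmx B *m (1%:M - Gammap gamma eta *m (dsubmx B)^T
                 *m invmx (Lmat (dsubmx B) gamma eta) *m dsubmx B).

Definition dae_solution (ng nl m : nat) (B : 'M[R]_(ng + nl, m))
  (gamma : 'rV[R]_m) (Mv Av : 'rV[R]_ng) (u : R -> 'cV[R]_ng) (p : 'cV[R]_nl)
  (T : \bar R) (thG : R -> 'cV[R]_ng) (thL : R -> 'cV[R]_nl)
  (w : R -> 'cV[R]_ng) : Prop :=
  [/\ has_deriv_on T thG w,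
      (exists dthL, has_deriv_on T thL dthL),
      (exists dw, has_deriv_on T w dw /\
         forall t, in_I T t ->
           diag_mx Mv *m dw t =
             - (diag_mx Av *m w t)
             - usubmx B *m diag_mx gamma *m sinv (B^T *m col_mx (thG t) (thL t))
             + u t)
    & forall t, in_I T t ->
        0 = - (dsubmx B *m diag_mx gamma *m sinv (B^T *m col_mx (thG t) (thL t)))
            + p].

(* solution of the reduced ODE model on [0,T), state in im B^T x R^ng;
   the vector field must be defined along the solution (B_L Gamma' B_L^T
   invertible). *)
Definition reduced_solution (ng nl m : nat) (B : 'M[R]_(ng + nl, m))
  (gamma : 'rV[R]_m) (Mv Av : 'rV[R]_ng) (u : R -> 'cV[R]_ng)
  (T : \bar R) (eta : R -> 'cV[R]_m) (w : R -> 'cV[R]_ng) : Prop :=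
  [/\ (forall t, in_I T t -> exists th : 'cV[R]_(ng + nl), eta t = B^T *m th),
      (forall t, in_I T t -> Lmat (dsubmx B) gamma (eta t) \in unitmx),
      has_deriv_on T eta (fun t => (BS B gamma (eta t))^T *m w t)
    & exists dw, has_deriv_on T w dw /\
         forall t, in_I T t ->
           diag_mx Mv *m dw t =
             - (diag_mx Av *m w t) - usubmx B *m diag_mx gamma *m sinv (eta t)
             + u t].

End Defs.

(* Main.v *)
Require Import Defs.
From HB Require Import structures.
From mathcomp Require Import all_boot all_order all_algebra.
From mathcomp Require Import all_classical all_reals all_analysis.
From mathcomp Require Import ring lra.
Set Implicit Arguments. Unset Strict Implicit. Unset Printing Implicit Defensive.
Import Order.TTheory GRing.Theory Num.Theory.
Import numFieldNormedType.Exports.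
Local Open Scope classical_set_scope.
Local Open Scope ring_scope.

Section Filt.
Context {R : realType} (T : \bar R).

Definition Fw (t : R) := within (fun h : R => in_I T (t + h)) (0:R)^'.

Lemma near_Fw t (P : R -> Prop) :
  (\forall h \near Fw t, P h) <->
  exists2 d : R, 0 < d & forall h, `|h| < d -> h != 0 -> in_I T (t + h) -> P h.
Proof.
rewrite near_withinE; split.
- move=> /nbhs_ballP [d d0 Hd]; exists d => // h hd h0 It.
  apply: (Hd h) => //; rewrite /ball /= sub0r normrN //.
- move=> [d d0 Hd]; apply/nbhs_ballP; exists d => // h /= hd h0 It.
  by apply: Hd => //; move: hd; rewrite /ball /= sub0r normrN.
Qed.

Instance Fw_proper t : in_I T t -> ProperFilter (Fw t).
Proof.
move=> [t0 tT]; rewrite /Fw; apply: Build_ProperFilter_ex.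
rewrite -/(Fw t).
move=> P /near_Fw [d d0 Hd].
have [e [e0 ed Ite]] : exists e : R, [/\ 0 < e, e < d & in_I T (t + e)].
  case: T tT => [TT| |] //= tT.
  - rewrite lte_fin in tT.
    exists (Num.min (d / 2) ((TT - t) / 2)); split.
    + by rewrite lt_min !divr_gt0 // subr_gt0.
    + by rewrite gt_min ltr_pdivrMr // ltr_pMr // ltr1n.
    + split; first by rewrite addr_ge0 // ltW // lt_min !divr_gt0 // subr_gt0.
      rewrite lte_fin -ltrBrDl; rewrite gt_min; apply/orP; right.
      by rewrite ltr_pdivrMr // ltr_pMr ?subr_gt0 // ltr1n.
  - exists (d / 2); split; first by rewrite divr_gt0.
    + by rewrite ltr_pdivrMr // ltr_pMr // ltr1n.
    + by split; [rewrite addr_ge0 // ltW // divr_gt0|rewrite ltry].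
exists e; apply: Hd => //; first by rewrite gtr0_norm.
by rewrite gt_eqF.
Qed.

End Filt.
Lemma cvg_mxP {R : realType} m n (U : Type) (F : set_system U) {FF : Filter F}
  (f : U -> 'M[R]_(m, n)) (l : 'M[R]_(m, n)) :
  f @ F --> l <-> forall i j, (fun x => f x i j) @ F --> l i j.
Proof.
split=> [fl i j|fl].
- apply/cvgrPdist_le => /= e e0.
  move/cvgrPdist_le : fl => /(_ _ e0) fl.
  apply: filterS fl => x /= H; apply: le_trans H.
  rewrite [leRHS]/Num.Def.normr/= mx_normrE.
  apply: le_trans; last exact: (le_bigmax _ _ (i, j)).
  by rewrite !mxE.
- apply/cvgrPdist_le => /= e e0.
  have : \forall x \near F, forall ij : 'I_m * 'I_n,
      `|l ij.1 ij.2 - f x ij.1 ij.2| <= e.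
    apply: filter_forall => ij.
    by move/cvgrPdist_le : (fl ij.1 ij.2) => /(_ _ e0).
  apply: filterS => x H.
  rewrite /Num.Def.normr/= mx_normrE (bigmax_le _ (ltW e0))//= => ij _.
  by rewrite !mxE.
Qed.
Lemma sin_quot {R : realType} (a : R) :
  (fun h : R => h^-1 * (sin (a + h) - sin a)) @ 0^' --> cos a.
Proof.
have Hd := @derivable_sin R a.
have E : derive (@sin R) a 1 = cos a by exact: derive_val.
rewrite /derivable in Hd; rewrite /derive in E; rewrite E in Hd.
apply: cvg_trans Hd; apply: near_eq_cvg; near=> h.
rewrite /=; change (h^-1 * (sin (h * 1 + a) - sin a) = h^-1 * (sin (a + h) - sin a)). by rewrite mulr1 (addrC h a).
Unshelve. all: by end_near. Qed.

Lemma chain_sin {R : realType} (U : set_system R) {FU : Filter U}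
  (g : R -> R) (a g' : R) :
  (fun h => h) @ U --> (0:R) -> (\forall h \near U, h != 0) ->
  (fun h => h^-1 * (g h - a)) @ U --> g' ->
  (fun h => h^-1 * (sin (g h) - sin a)) @ U --> cos a * g'.
Proof.
move=> h0 hn0 qg.
pose S (d : R) := if d == 0 then cos a else d^-1 * (sin (a + d) - sin a).
have Sc : S @ (0:R) --> cos a.
  have -> : cos a = S 0 by rewrite /S eqxx.
  apply/continuous_withinNx.
  rewrite {2}/S eqxx.
  apply: (@cvg_trans _ ((fun h : R => h^-1 * (sin (a + h) - sin a)) @ 0^')); last exact: sin_quot.
  apply: near_eq_cvg; near=> d.
  have : d != 0 by near: d; exact: nbhs_dnbhs_neq.
  by rewrite /S => /negbTE ->.
have D0 : (fun h => g h - a) @ U --> (0:R).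
  have : (fun h => h * (h^-1 * (g h - a))) @ U --> 0 * g'.
    by apply: cvgM.
  rewrite mul0r; apply: cvg_trans; apply: near_eq_cvg.
  by apply: filterS hn0 => h /= hn; rewrite mulrA mulfV // mul1r.
have C1 : (fun h => S (g h - a)) @ U --> cos a.
  exact: (cvg_comp _ _ D0 Sc).
apply: (@cvg_trans _ ((fun h => S (g h - a) * (h^-1 * (g h - a))) @ U)); last exact: cvgM C1 qg.
apply: near_eq_cvg; apply: filterE => h /=.
set d := g h - a.
have -> : g h = a + d by rewrite /d addrC subrK.
rewrite /S; have [->|dn0] := eqVneq d 0.
  by rewrite !addr0 subrr !mulr0.
by rewrite mulrAC mulrCA mulVf // mulr1.
Unshelve. all: by end_near. Qed.
Section Der.
Context {R : realType} (T : \bar R).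

Lemma hd_add n (f f' g g' : R -> 'cV[R]_n) :
  has_deriv_on T f f' -> has_deriv_on T g g' ->
  has_deriv_on T (fun t => f t + g t) (fun t => f' t + g' t).
Proof.
move=> Hf Hg t It.
have -> : (fun h : R => h^-1 *: (f (t + h) + g (t + h) - (f t + g t))) =
  (fun h => h^-1 *: (f (t + h) - f t) + h^-1 *: (g (t + h) - g t)).
  by apply/funext => h /=; rewrite -scalerDr addrACA opprD.
exact: cvgD (Hf t It) (Hg t It).
Qed.

Lemma hd_opp n (f f' : R -> 'cV[R]_n) :
  has_deriv_on T f f' -> has_deriv_on T (fun t => - f t) (fun t => - f' t).
Proof.
move=> Hf t It.
have -> : (fun h : R => h^-1 *: (- f (t + h) - - f t)) =
  (fun h => - (h^-1 *: (f (t + h) - f t))).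
  by apply/funext => h /=; rewrite -scalerN opprB addrC opprK.
exact: cvgN (Hf t It).
Qed.

Lemma hd_cst n (c : 'cV[R]_n) : has_deriv_on T (fun _ => c) (fun _ => 0).
Proof.
move=> t It.
have -> : (fun h : R => h^-1 *: (c - c)) = fun _ => 0.
  by apply/funext => h; rewrite subrr scaler0.
exact: cvg_cst.
Qed.

Lemma hd_mul n k (A : 'M[R]_(k, n)) (f f' : R -> 'cV[R]_n) :
  has_deriv_on T f f' ->
  has_deriv_on T (fun t => A *m f t) (fun t => A *m f' t).
Proof.
move=> Hf t It.
have -> : (fun h : R => h^-1 *: (A *m f (t + h) - A *m f t)) =
  (fun h => A *m (h^-1 *: (f (t + h) - f t))).
  by apply/funext => h; rewrite -mulmxBr scalemxAr.
have Hc := (cvg_mxP _ _).1 (Hf t It).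
apply/cvg_mxP => i j.
rewrite mxE.
under eq_fun do rewrite mxE.
apply: cvg_big; first exact: add_continuous.
move=> l _; apply: cvgMl_tmp; exact: Hc.
Qed.

Lemma hd_uniq n (f f' : R -> 'cV[R]_n) (c : 'cV[R]_n) :
  has_deriv_on T f f' -> (forall t, in_I T t -> f t = c) ->
  forall t, in_I T t -> f' t = 0.
Proof.
move=> Hf Hc t It.
have Pf := Fw_proper It.
have H1 := Hf t It.
have H2 : (fun h : R => h^-1 *: (f (t + h) - f t)) @ Fw T t --> (0 : 'cV[R]_n).
  apply: (@cvg_trans _ ((fun _ : R => (0 : 'cV[R]_n)) @ Fw T t)); last exact: cvg_cst.
  apply: near_eq_cvg; apply/near_Fw; exists 1 => // h _ _ Ih.
  by rewrite /= Hc // Hc // subrr scaler0.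
have Pf' := fmap_proper_filter (fun h : R => h^-1 *: (f (t + h) - f t)) Pf.
exact: (@cvg_unique _ (@norm_hausdorff _ _) _ Pf' _ _ H1 H2).
Qed.

Lemma Fw_id t : (fun h : R => h) @ Fw T t --> (0 : R).
Proof.
apply: cvg_within_filter; rewrite /dnbhs; apply: cvg_within_filter; exact: cvg_id.
Qed.

Lemma Fw_neq0 t : \forall h \near Fw T t, h != 0.
Proof. by apply/near_Fw; exists 1. Qed.

Lemma hd_sinv n (f f' : R -> 'cV[R]_n) :
  has_deriv_on T f f' ->
  has_deriv_on T (fun t => sinv (f t))
    (fun t => diag_mx (map_mx cos (f t))^T *m f' t).
Proof.
move=> Hf t It.
have /cvg_mxP Hc := Hf t It.
apply/cvg_mxP => i j; rewrite (ord1 j).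
rewrite mul_diag_mx !mxE.
under eq_fun do rewrite !mxE.
apply: chain_sin; [exact: Fw_id|exact: Fw_neq0|].
have := Hc i 0; under eq_fun do rewrite !mxE; exact.
Qed.

End Der.
Section LinAlg.
Context {R : realType}.

Lemma inc_col n m (B : 'M[R]_(n, m)) (z : 'rV[R]_n) k i j :
  i != j -> B i k = 1 -> B j k = -1 ->
  (forall l, l != i -> l != j -> B l k = 0) ->
  (z *m B) 0 k = z 0 i - z 0 j.
Proof.
move=> ij Bi Bj Bl.
rewrite mxE (bigD1 i) //= (bigD1 j) /=; last by rewrite eq_sym.
rewrite big1 => [|l /andP [li lj]]; last by rewrite Bl // mulr0.
by rewrite Bi Bj addr0 mulr1 mulrN1.
Qed.

Lemma inc_const n m (B : 'M[R]_(n, m)) (z : 'rV[R]_n) :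
  incidence B -> inc_connected B -> z *m B = 0 -> forall a b, z 0 a = z 0 b.
Proof.
move=> inc con zB.
have adj x y : inc_adj B x y -> z 0 x = z 0 y.
  move=> /existsP [k /andP [bx b_y]].
  have [i [j [ij Bi Bj Bl]]] := inc k.
  have zk := inc_col z ij Bi Bj Bl.
  rewrite zB mxE in zk.
  have zij : z 0 i = z 0 j by apply/eqP; rewrite -subr_eq0 -zk.
  have Hx w : B w k != 0 -> z 0 w = z 0 i.
    move=> bw; have [->//|wi] := eqVneq w i.
    have [->//|wj] := eqVneq w j.
    by move: bw; rewrite Bl ?eqxx.
  by rewrite (Hx _ bx) (Hx _ b_y).
move=> a b; have /connectP [p pth ->] := con a b.
elim: p a pth => [|c p IH] a //= /andP [ac pth].
by rewrite (adj _ _ ac); exact: IH.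
Qed.

Lemma quad_zero k m (C : 'M[R]_(k, m)) (d : 'rV[R]_m) (v : 'rV[R]_k) :
  (forall l, 0 < d 0 l) -> v *m (C *m diag_mx d *m C^T) = 0 -> v *m C = 0.
Proof.
move=> dpos H.
set y := v *m C.
have E : y *m diag_mx d *m y^T = 0.
  by rewrite /y trmx_mul !mulmxA -(mulmxA v C) -(mulmxA v) H mul0mx.
have S : \sum_l d 0 l * y 0 l ^+ 2 = 0.
  have := congr1 (fun M : 'M[R]_1 => M 0 0) E.
  have H00 : (0 : 'M[R]_1) 0 0 = 0 by rewrite mxE.
  rewrite /= [in X in X = _ -> _]mxE H00 => H0; rewrite -[RHS]H0.
  apply: eq_bigr => l _.
  by rewrite mul_mx_diag !mxE; ring.
have Hl l : y 0 l = 0.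
  have H1 := @psumr_eq0P _ _ xpredT (fun l => d 0 l * y 0 l ^+ 2)
    (fun i _ => mulr_ge0 (ltW (dpos i)) (sqr_ge0 _)) S l isT.
  have : d 0 l * y 0 l ^+ 2 == 0 by rewrite /= in H1; rewrite H1.
  by rewrite mulf_eq0 gt_eqF //= expf_eq0 /= => /eqP.
by apply/rowP => l; rewrite Hl mxE.
Qed.

Lemma Lunit ng nl m (B : 'M[R]_(ng + nl, m)) (d : 'rV[R]_m) :
  (0 < ng)%N -> incidence B -> inc_connected B -> (forall l, 0 < d 0 l) ->
  dsubmx B *m diag_mx d *m (dsubmx B)^T \in unitmx.
Proof.
move=> ng0 inc con dpos; rewrite unitmxE unitfE; apply/negP => /det0P [v vn0 Hv].
have vB := quad_zero dpos Hv.
set z := row_mx (0 : 'rV[R]_ng) v.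
have zB : z *m B = 0.
  by rewrite /z -[B]vsubmxK mul_row_col mul0mx add0r vB.
have Hc := inc_const inc con zB.
move/eqP: vn0; apply; apply/rowP => l; rewrite [RHS]mxE.
have := Hc (rshift ng l) (lshift nl (Ordinal ng0)).
by rewrite /z row_mxEr row_mxEl mxE.
Qed.

Definition e0 n (i0 : 'I_n) : 'cV[R]_n := \col_i ((i == i0)%:R).
Definition Km n m (B : 'M[R]_(n, m)) i0 := B *m B^T + e0 i0 *m (e0 i0)^T.

Lemma e0T n (i0 : 'I_n) k (x : 'M[R]_(n, k)) :
  (e0 i0)^T *m x = \row_j (x i0 j).
Proof.
apply/rowP => j; rewrite !mxE (bigD1 i0) //= big1 => [|i ii0].
  by rewrite !mxE eqxx mul1r addr0.
by rewrite !mxE (negbTE ii0) mul0r.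
Qed.

Lemma row_e0 n (i0 : 'I_n) (v : 'rV[R]_n) : v *m e0 i0 = (v 0 i0)%:M.
Proof.
apply/matrixP => i j; rewrite (ord1 i) (ord1 j) !mxE (bigD1 i0) //= big1 => [|l li0].
  by rewrite !mxE eqxx mulr1 addr0.
by rewrite !mxE (negbTE li0) mulr0.
Qed.

Lemma Kunit n m (B : 'M[R]_(n, m)) i0 :
  incidence B -> inc_connected B -> Km B i0 \in unitmx.
Proof.
move=> inc con; rewrite unitmxE unitfE; apply/negP => /det0P [v vn0 Hv].
have E : Km B i0 = row_mx B (e0 i0) *m diag_mx (const_mx 1) *m (row_mx B (e0 i0))^T.
  by rewrite diag_const_mx mulmx1 tr_row_mx mul_row_col.
rewrite E in Hv.
have := quad_zero (d := const_mx 1) _ Hv.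
rewrite mul_mx_row -row_mx0 => /(_ _) /eq_row_mx [|vB ve].
  by move=> l; rewrite mxE ltr01.
have Hc := inc_const inc con vB.
have v0 : v 0 i0 = 0.
  by have := congr1 (fun M : 'M[R]_1 => M 0 0) ve; rewrite row_e0 !mxE /= mulr1n.
move/eqP: vn0; apply; apply/rowP => l; rewrite [RHS]mxE.
by rewrite (Hc l i0).
Qed.

Lemma Bone n m (B : 'M[R]_(n, m)) : incidence B -> B^T *m (const_mx 1 : 'cV[R]_n) = 0.
Proof.
move=> inc.
have H : (const_mx 1 : 'rV[R]_n) *m B = 0.
  apply/rowP => k; have [i [j [ij Bi Bj Bl]]] := inc k.
  by rewrite (inc_col _ ij Bi Bj Bl) !mxE subrr.
have -> : (const_mx 1 : 'cV[R]_n) = (const_mx 1 : 'rV[R]_n)^T by rewrite trmx_const.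
by rewrite -trmx_mul H trmx0.
Qed.

Lemma Qprop n m (B : 'M[R]_(n, m)) i0 (th : 'cV[R]_n) :
  incidence B -> inc_connected B ->
  invmx (Km B i0) *m B *m (B^T *m th) = th - th i0 0 *: const_mx 1.
Proof.
move=> inc con.
have K1 : Km B i0 *m (th - th i0 0 *: const_mx 1) = B *m (B^T *m th).
  rewrite /Km mulmxBr -scalemxAr !mulmxDl -!mulmxA Bone // mulmx0 add0r.
  rewrite !e0T.
  have -> : (\row_j (const_mx 1 : 'cV[R]_n) i0 j) = 1%:M.
    by apply/matrixP => i j; rewrite (ord1 i) (ord1 j) !mxE.
  have -> : (\row_j th i0 j) = (th i0 0)%:M.
    by apply/matrixP => i j; rewrite (ord1 i) (ord1 j) !mxE.
  by rewrite mulmx1 mul_mx_scalar addrK.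
by rewrite -mulmxA -K1 mulKmx // Kunit.
Qed.

End LinAlg.
Section Ana2.
Context {R : realType} (T : \bar R).

Definition sd (g g' : R -> R) := forall t, in_I T t ->
  (fun h => h^-1 * (g (t + h) - g t)) @ Fw T t --> g' t.

Lemma room x : in_I T x ->
  exists2 e : R, 0 < e & forall h, 0 <= h < e -> in_I T (x + h).
Proof.
move=> [x0 xT]; case: T xT => [TT| |] //= xT.
- rewrite lte_fin in xT; exists (TT - x); first by rewrite subr_gt0.
  move=> h /andP [h0 he]; split; first by rewrite addr_ge0.
  by rewrite lte_fin -ltrBrDl.
- exists 1 => // h /andP [h0 _]; split; [by rewrite addr_ge0|by rewrite ltry].
Qed.

Lemma room_int x : 0 < x -> (x%:E < T)%E ->
  exists2 e : R, 0 < e & forall h, `|h| < e -> in_I T (x + h).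
Proof.
move=> x0 xT; case: T xT => [TT| |] //= xT.
- rewrite lte_fin in xT; exists (Num.min x (TT - x)).
    by rewrite lt_min x0 subr_gt0.
  move=> h; rewrite lt_min => /andP [hx hT]; split.
    by move: (ler_norm (- h)); rewrite normrN => H; lra.
  rewrite lte_fin; move: (ler_norm h) => H; lra.
- exists x => // h hx; split; last by rewrite ltry.
  by move: (ler_norm (- h)); rewrite normrN => H; lra.
Qed.

Lemma Fw_int x : 0 < x -> (x%:E < T)%E -> forall P, Fw T x P -> (0:R)^' P.
Proof.
move=> x0 xT P /near_Fw [d d0 Hd].
have [e e0 He] := room_int x0 xT.
rewrite /dnbhs.
apply/nbhs_ballP.
exists (Num.min d e); first by rewrite /= lt_min d0 e0.
move=> h /=; rewrite /ball /= sub0r normrN => hde hn0.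
move: hde; rewrite lt_min => /andP [hd he].
exact: Hd hd hn0 (He h he).
Qed.

Lemma Fw_right : (0%:E < T)%E -> forall P, Fw T 0 P -> (0:R)^'+ P.
Proof.
move=> T0 P /near_Fw [d d0 Hd].
have [e e0 He] := room (conj (lexx 0) T0).
rewrite /at_right; apply/nbhs_ballP.
exists (Num.min d e); first by rewrite /= lt_min d0 e0.
move=> h /=; rewrite /ball /= sub0r normrN => hde hp.
move: hde; rewrite lt_min => /andP [hd he].
apply: Hd => //; first by rewrite gt_eqF.
by apply: He; rewrite (ltW hp) /= -(gtr0_norm hp).
Qed.

Lemma isd_of (g : R -> R) x l :
  (fun h => h^-1 * (g (x + h) - g x)) @ (0:R)^' --> l -> is_derive x 1 g l.
Proof.
move=> L.
have L' : (fun h : R => h^-1 *: ((g \o shift x) (h *: 1) - g x)) @ (0:R)^' --> l.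
  apply: cvg_trans L; apply: near_eq_cvg; near=> h.
  rewrite /=; change (h^-1 * (g (x + h) - g x) = h^-1 * (g (h * 1 + x) - g x)).
  by rewrite mulr1 (addrC x h).
apply: DeriveDef; first exact: (cvgP _ L').
exact: (cvg_lim (@Rhausdorff R) L').
Unshelve. all: by end_near. Qed.

Lemma sd_cont g g' t : sd g g' -> in_I T t ->
  (fun h => g (t + h)) @ Fw T t --> g t.
Proof.
move=> Hg It.
have Pf := Fw_proper It.
have : (fun h => h * (h^-1 * (g (t + h) - g t)) + g t) @ Fw T t --> 0 * g' t + g t.
  apply: cvgD; last exact: cvg_cst.
  apply: cvgM; [exact: Fw_id|exact: Hg].
rewrite mul0r add0r; apply: cvg_trans; apply: near_eq_cvg.
apply: filterS (Fw_neq0 T t) => h /= hn0.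
by rewrite mulrA mulfV // mul1r subrK.
Qed.

Lemma sd_interior g g' x : sd g g' -> 0 < x -> (x%:E < T)%E ->
  is_derive x 1 g (g' x).
Proof.
move=> Hg x0 xT; apply: isd_of.
have Ix : in_I T x by split; [exact: ltW|].
apply: cvg_trans (Hg x Ix); apply: cvg_fmap2 => P; exact: Fw_int.
Qed.

Lemma sd_cont_int g g' x : sd g g' -> 0 < x -> (x%:E < T)%E ->
  {for x, continuous g}.
Proof.
move=> Hg x0 xT; have D := sd_interior Hg x0 xT.
exact/differentiable_continuous/derivable1_diffP/(@ex_derive _ _ _ _ _ _ _ D).
Qed.

Lemma sd_right0 g g' : sd g g' -> (0%:E < T)%E -> g @ (0:R)^'+ --> g 0.
Proof.
move=> Hg T0; have I0 : in_I T 0 by split.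
have C := sd_cont Hg I0.
have E : (fun h => g (0 + h)) = g by apply/funext => h; rewrite add0r.
rewrite E in C.
apply: (@cvg_trans _ (g @ Fw T 0)); last exact: C.
apply: cvg_fmap2 => P; exact: Fw_right.
Qed.

Lemma sd_const g : sd g (fun _ => 0) -> forall t, in_I T t -> g t = g 0.
Proof.
move=> Hg t [t0 tT].
have T0 : (0%:E < T)%E by apply: le_lt_trans tT; rewrite lee_fin.
have [->//|tpos] := eqVneq t 0.
have tp : 0 < t by rewrite lt_neqAle eq_sym tpos t0.
have Hd : forall x, x \in `]0, t[ -> is_derive x 1 g 0.
  move=> x; rewrite in_itv /= => /andP [x0 xt].
  apply: (sd_interior (g' := fun _ => 0)) Hg x0 _; apply: lt_trans tT; by rewrite lte_fin.
have Hc : {within `[0, t], continuous g}.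
  apply/continuous_within_itvP => //; split.
  + move=> x; rewrite in_itv /= => /andP [x0 xt].
    apply: sd_cont_int Hg x0 _; apply: lt_trans tT; by rewrite lte_fin.
  + exact: sd_right0 Hg T0.
  + apply: cvg_within_filter; exact: sd_cont_int Hg tp tT.
have [c _] := @MVT_segment R g (fun _ => 0) 0 t t0 Hd Hc.
by rewrite mul0r => /eqP; rewrite subr_eq0 => /eqP.
Qed.

Lemma ext_cont g g' : sd g g' -> (0%:E < T)%E ->
  forall s, (s%:E < T)%E -> {for s, continuous (fun u : R => g (Num.max u 0))}.
Proof.
move=> Hg T0 s sT.
have [sn|sp|->] := ltgtP s 0.
- rewrite /prop_for /continuous_at (max_idPr (ltW sn)).
  apply: (@cvg_trans R ((fun _ : R => g 0) @ (nbhs s))); last exact: cvg_cst.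
  apply: near_eq_cvg; near=> u.
  have : u < 0 by near: u; exact: lt_nbhsl.
  by move=> un /=; rewrite (max_idPr (ltW un)).
- rewrite /prop_for /continuous_at (max_idPl (ltW sp)).
  apply: (@cvg_trans R (g @ (nbhs s))); last exact: sd_cont_int Hg sp sT.
  apply: near_eq_cvg; near=> u.
  have : 0 < u by near: u; exact: lt_nbhsr.
  by move=> un /=; rewrite (max_idPl (ltW un)).
- rewrite /prop_for /continuous_at maxxx.
  apply/cvgrPdist_lt => e e0.
  have I0 : in_I T 0 by split.
  have /cvgrPdist_lt /(_ e e0) /near_Fw [d d0 Hd] := sd_cont Hg I0.
  have [r r0 Hr] := room I0.
  apply/nbhs_ballP; exists (Num.min d r); first by rewrite /= lt_min d0 r0.
  move=> u; rewrite /ball /= sub0r normrN => ud.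
  move: ud; rewrite lt_min => /andP [ud ur].
  have [un|up] := leP u 0.
    by rewrite subrr normr0.
  have := Hd u ud (lt0r_neq0 up).
  rewrite !add0r; apply.
  have := Hr u; rewrite add0r; apply.
  by rewrite (ltW up) /= -(gtr0_norm up).
Unshelve. all: by end_near. Qed.

Lemma antideriv g g' : sd g g' -> (0%:E < T)%E -> exists c, sd c g.
Proof.
move=> Hg T0.
pose ft := fun u : R => g (Num.max u 0).
pose c := fun x : R =>
  (\int[lebesgue_measure]_(t in [set` Interval (BLeft (-1)) (BRight x)]) (ft t))%R.
exists c => x Ix.
have [e e0 He] := room Ix.
have [x0 xT] := Ix.
pose u := x + e / 2.
have xu : x < u by rewrite /u ltrDl divr_gt0.
have uT : (u%:E < T)%E.
  have := He (e / 2); rewrite -/u => H; apply: (proj2 (H _)).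
  by rewrite ltW ?divr_gt0 //= ltr_pdivrMr // ltr_pMr // ltr1n.
have fc : forall y, y <= u -> {for y, continuous ft}.
  move=> y yu; apply: (ext_cont Hg T0); apply: le_lt_trans uT; by rewrite lee_fin.
have int : lebesgue_measure.-integrable [set` Interval (BLeft (-1)) (BRight u)] (EFin \o ft).
  apply: continuous_compact_integrable; first exact: segment_compact.
  apply: continuous_in_subspaceT => y; rewrite inE /= in_itv /= => /andP [_ yu].
  exact: fc.
have ax : (BLeft (-1%R : R) < BRight x)%O.
  by rewrite bnd_simp; lra.
have := @continuous_FTC1 R ft (BLeft (-1)) x u xu int.
move=> /(_ _ (fc x (ltW xu))) [|D1 D2].
  by rewrite /= lte_fin; lra.
have L : (fun h : R => h^-1 *: ((c \o shift x) (h *: 1) - c x)) @ (0:R)^' --> g x.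
  have -> : g x = derive c x 1.
    by rewrite -derive1E D2 /ft (max_idPl x0).
  exact: D1.
apply: cvg_within_filter.
apply: (@cvg_trans R ((fun h : R => h^-1 *: ((c \o shift x) (h *: 1) - c x)) @ (0:R)^')); last exact: L.
apply: near_eq_cvg; near=> h.
rewrite /=; change (h^-1 * (c (h * 1 + x) - c x) = h^-1 * (c (x + h) - c x)).
by rewrite mulr1 (addrC h x).
Unshelve. all: by end_near. Qed.

Lemma hd_sd n (f f' : R -> 'cV[R]_n) i :
  has_deriv_on T f f' -> sd (fun t => f t i 0) (fun t => f' t i 0).
Proof.
move=> Hf t It; have /cvg_mxP Hc := Hf t It.
have := Hc i 0; under eq_fun do rewrite !mxE; exact.
Qed.

Lemma hd_scal n (c c' : R -> R) (v : 'cV[R]_n) :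
  sd c c' -> has_deriv_on T (fun t => c t *: v) (fun t => c' t *: v).
Proof.
move=> Hc t It.
have -> : (fun h : R => h^-1 *: (c (t + h) *: v - c t *: v)) =
  (fun h => (h^-1 * (c (t + h) - c t)) *: v).
  by apply/funext => h; rewrite -scalerBl scalerA.
exact: cvgZr_tmp (Hc t It).
Qed.

Lemma hd_const n (f : R -> 'cV[R]_n) :
  has_deriv_on T f (fun _ => 0) -> forall t, in_I T t -> f t = f 0.
Proof.
move=> Hf t It; apply/matrixP => i j; rewrite (ord1 j).
have H := @hd_sd n f (fun _ => 0) i Hf.
have H' : sd (fun t => f t i 0) (fun _ => 0).
  by move=> s Is; have := H s Is; rewrite mxE.
exact: sd_const H' t It.
Qed.

Lemma hd_ext n (f f' f'' : R -> 'cV[R]_n) :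
  has_deriv_on T f f' -> (forall t, in_I T t -> f' t = f'' t) ->
  has_deriv_on T f f''.
Proof. by move=> Hf E t It; rewrite -E //; exact: Hf. Qed.

End Ana2.
Section Alg2.
Context {R : realType}.

Lemma BsplitT ng nl m (B : 'M[R]_(ng + nl, m)) (a : 'cV[R]_ng) (b : 'cV[R]_nl) :
  B^T *m col_mx a b = (usubmx B)^T *m a + (dsubmx B)^T *m b.
Proof. by rewrite -{1}[B]vsubmxK tr_col_mx mul_row_col. Qed.

Lemma GP_diag m (gamma : 'rV[R]_m) (eta : 'cV[R]_m) :
  Gammap gamma eta = diag_mx (\row_k (gamma 0 k * cos (eta k 0))).
Proof.
apply/matrixP => i j; rewrite /Gammap mul_diag_mx !mxE.
by case: (i == j); rewrite ?mulr1n ?mulr0n ?mulr0.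
Qed.

Lemma GP_sym m (gamma : 'rV[R]_m) (eta : 'cV[R]_m) :
  (Gammap gamma eta)^T = Gammap gamma eta.
Proof. by rewrite GP_diag tr_diag_mx. Qed.

Lemma trmx_ABA k m (A : 'M[R]_(k, m)) (G : 'M[R]_m) :
  (A *m G *m A^T)^T = A *m G^T *m A^T.
Proof. by rewrite !trmx_mul trmxK mulmxA. Qed.

Lemma L_sym nl m (BL : 'M[R]_(nl, m)) gamma eta :
  (Lmat BL gamma eta)^T = Lmat BL gamma eta.
Proof. by rewrite /Lmat trmx_ABA GP_sym. Qed.

Lemma BS_T_gen ng nl m (BG : 'M[R]_(ng, m)) (BL : 'M[R]_(nl, m)) (G : 'M[R]_m)
  (L : 'M[R]_nl) (x : 'cV[R]_ng) :
  G^T = G -> L^T = L ->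
  (BG *m (1%:M - G *m BL^T *m invmx L *m BL))^T *m x =
  BG^T *m x + BL^T *m (- (invmx L *m (BL *m G *m BG^T *m x))).
Proof.
move=> GS LS.
rewrite trmx_mul linearB /= trmx1 !trmx_mul trmxK GS trmx_inv LS.
by rewrite mulmxBl mul1mx mulmxBl mulmxN !mulmxA.
Qed.

Lemma BS_T ng nl m (B : 'M[R]_(ng + nl, m)) gamma eta (x : 'cV[R]_ng) :
  (BS B gamma eta)^T *m x =
  B^T *m col_mx x (- (invmx (Lmat (dsubmx B) gamma eta) *m
     (dsubmx B *m Gammap gamma eta *m (usubmx B)^T *m x))).
Proof. by rewrite BsplitT /BS BS_T_gen // ?GP_sym ?L_sym. Qed.

Lemma BL_zero_gen ng nl m (BG : 'M[R]_(ng, m)) (BL : 'M[R]_(nl, m)) (G : 'M[R]_m)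
  (L : 'M[R]_nl) (x : 'cV[R]_ng) :
  L = BL *m G *m BL^T -> L \in unitmx ->
  BL *m G *m (BG^T *m x + BL^T *m (- (invmx L *m (BL *m G *m BG^T *m x)))) = 0.
Proof.
move=> LE U; rewrite mulmxDr !mulmxN !mulmxA -LE.
by rewrite -!mulmxA mulKVmx // !mulmxA subrr.
Qed.

Lemma BL_BS_zero ng nl m (B : 'M[R]_(ng + nl, m)) gamma eta (x : 'cV[R]_ng) :
  Lmat (dsubmx B) gamma eta \in unitmx ->
  dsubmx B *m Gammap gamma eta *m ((BS B gamma eta)^T *m x) = 0.
Proof.
move=> U; rewrite BS_T BsplitT; exact: BL_zero_gen.
Qed.

Lemma solve_y ng nl m (BG : 'M[R]_(ng, m)) (BL : 'M[R]_(nl, m)) (G : 'M[R]_m)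
  (L : 'M[R]_nl) (w : 'cV[R]_ng) (y : 'cV[R]_nl) :
  L = BL *m G *m BL^T -> L \in unitmx ->
  BL *m G *m (BG^T *m w + BL^T *m y) = 0 ->
  y = - (invmx L *m (BL *m G *m BG^T *m w)).
Proof.
move=> LE U H.
rewrite mulmxDr !mulmxA -LE in H.
have Ly : L *m y = - (BL *m G *m BG^T *m w).
  by apply/eqP; rewrite -addr_eq0 addrC H.
by rewrite -mulmxN -Ly mulKmx.
Qed.

Lemma GP_expand k m (A : 'M[R]_(k, m)) gamma eta (X : 'cV[R]_m) :
  A *m diag_mx gamma *m (diag_mx (map_mx cos eta)^T *m X) =
  A *m Gammap gamma eta *m X.
Proof. by rewrite /Gammap !mulmxA. Qed.

Lemma col_lin ng nl (a : 'cV[R]_ng) (b : 'cV[R]_nl) :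
  col_mx a b = col_mx 1%:M 0 *m a + col_mx 0 1%:M *m b.
Proof. by rewrite !mul_col_mx !mul1mx !mul0mx add_col_mx addr0 add0r. Qed.

End Alg2.

Close Scope classical_set_scope.
Local Open Scope ring_scope.

Theorem theorem1 (R : realType) (ng nl m : nat) (B : 'M[R]_(ng + nl, m))
  (gamma : 'rV[R]_m) (Mv Av : 'rV[R]_ng) (u : R -> 'cV[R]_ng) (p : 'cV[R]_nl)
  (T : \bar R) :
  (0 < ng)%N ->
  incidence B -> inc_connected B ->
  (forall k, 0 < gamma 0 k) ->
  (forall i, 0 < Mv 0 i) -> (forall i, 0 < Av 0 i) ->
  (0%:E < T)%E ->
  (* (i) *)
  (forall (thG : R -> 'cV[R]_ng) (thL : R -> 'cV[R]_nl) (w : R -> 'cV[R]_ng),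
     dae_solution B gamma Mv Av u p T thG thL w ->
     (forall t, in_I T t -> in_Omega (B^T *m col_mx (thG t) (thL t))) ->
     reduced_solution B gamma Mv Av u T
       (fun t => B^T *m col_mx (thG t) (thL t)) w)
  /\
  (* (ii) *)
  (forall (eta : R -> 'cV[R]_m) (w : R -> 'cV[R]_ng),
     reduced_solution B gamma Mv Av u T eta w ->
     (exists th0 : 'cV[R]_(ng + nl), eta 0 = B^T *m th0) ->
     0 = p - dsubmx B *m diag_mx gamma *m sinv (eta 0) ->
     exists (thG : R -> 'cV[R]_ng) (thL : R -> 'cV[R]_nl),
       (forall t, in_I T t -> B^T *m col_mx (thG t) (thL t) = eta t) /\
       dae_solution B gamma Mv Av u p T thG thL w).
Proof.
move=> ng0 inc con gpos Mpos Apos T0; split.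
- move=> thG thL w [HthG [dthL HthL] [dw [Hdw Heq]] Hc] Hom.
  set eta := fun t => B^T *m col_mx (thG t) (thL t).
  have Hunit : forall t, in_I T t -> Lmat (dsubmx B) gamma (eta t) \in unitmx.
    move=> t It; rewrite /Lmat GP_diag; apply: Lunit => // k.
    rewrite mxE mulr_gt0 //; apply: cos_gt0_pihalf; exact: Hom t It k.
  have Hth : has_deriv_on T (fun t => col_mx (thG t) (thL t))
      (fun t => col_mx (w t) (dthL t)).
    apply: (hd_ext (f' := fun t => col_mx 1%:M 0 *m w t + col_mx 0 1%:M *m dthL t)).
      have -> : (fun t => col_mx (thG t) (thL t)) =
          (fun t => col_mx 1%:M 0 *m thG t + col_mx 0 1%:M *m thL t).
        by apply/funext => t; rewrite -col_lin.
      by apply: hd_add; apply: hd_mul.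
    by move=> t _; rewrite -col_lin.
  have Heta : has_deriv_on T eta (fun t => B^T *m col_mx (w t) (dthL t)).
    exact: hd_mul.
  have Hphi := hd_add (hd_opp (hd_mul (A := dsubmx B *m diag_mx gamma) (hd_sinv Heta)))
    (hd_cst (T := T) p).
  have Z := hd_uniq Hphi (c := 0) (fun t It => esym (Hc t It)).
  split.
  + by move=> t It; exists (col_mx (thG t) (thL t)).
  + exact: Hunit.
  + apply: hd_ext Heta _ => t It.
    have Z1 := Z t It.
    rewrite addr0 GP_expand in Z1.
    have Z2 : dsubmx B *m Gammap gamma (eta t) *m (B^T *m col_mx (w t) (dthL t)) = 0.
      by rewrite -[LHS]opprK Z1 oppr0.
    rewrite BsplitT in Z2.
    have Y := solve_y (erefl (Lmat (dsubmx B) gamma (eta t))) (Hunit t It) Z2.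
    by rewrite BS_T -Y.
  + by exists dw.
- move=> eta w [Him Hunit Heta [dw [Hdw Heq]]] _ Hcomp.
  pose i0 : 'I_(ng + nl) := lshift nl (Ordinal ng0).
  pose j0 : 'I_ng := Ordinal ng0.
  pose Q := invmx (Km B i0) *m B.
  have Hw0 := @hd_sd R T ng w dw j0 Hdw.
  have [c Hc] := antideriv Hw0 T0.
  pose th := fun t => c t *: (const_mx 1 : 'cV[R]_(ng + nl)) + Q *m eta t.
  pose y := fun t => - (invmx (Lmat (dsubmx B) gamma (eta t)) *m
      (dsubmx B *m Gammap gamma (eta t) *m (usubmx B)^T *m w t)).
  have Hth : has_deriv_on T th (fun t => col_mx (w t) (y t)).
    have H1 := hd_scal (v := (const_mx 1 : 'cV[R]_(ng + nl))) Hc.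
    have H2 := hd_mul (A := Q) Heta.
    apply: hd_ext (hd_add H1 H2) _ => t It.
    rewrite BS_T /Q Qprop // -/(y t).
    have -> : col_mx (w t) (y t) i0 0 = w t j0 0 by rewrite col_mxEu.
    by rewrite addrC subrK.
  have BTth : forall t, in_I T t -> B^T *m th t = eta t.
    move=> t It; have [th1 E] := Him t It.
    rewrite /th mulmxDr -scalemxAr Bone // scaler0 add0r E /Q Qprop //.
    by rewrite mulmxBr -scalemxAr Bone // scaler0 subr0.
  exists (fun t => usubmx (th t)), (fun t => dsubmx (th t)).
  split; first by move=> t It; rewrite vsubmxK; exact: BTth.
  split.
  + have -> : (fun t => usubmx (th t)) = (fun t => row_mx 1%:M 0 *m th t).
      by apply/funext => t; rewrite -{2}[th t]vsubmxK mul_row_col mul1mx mul0mx addr0.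
    apply: hd_ext (hd_mul (A := row_mx 1%:M 0) Hth) _ => t It.
    by rewrite mul_row_col mul1mx mul0mx addr0.
  + exists (fun t => row_mx 0 1%:M *m col_mx (w t) (y t)).
    have -> : (fun t => dsubmx (th t)) = (fun t => row_mx 0 1%:M *m th t).
      by apply/funext => t; rewrite -{2}[th t]vsubmxK mul_row_col mul1mx mul0mx add0r.
    exact: (hd_mul (A := row_mx 0 1%:M) Hth).
  + exists dw; split => // t It; rewrite vsubmxK BTth //; exact: Heq.
  + move=> t It; rewrite vsubmxK BTth //.
    have Hphi := hd_add (hd_opp (hd_mul (A := dsubmx B *m diag_mx gamma) (hd_sinv Heta)))
      (hd_cst (T := T) p).
    have Hphi0 : has_deriv_on T
        (fun s => - (dsubmx B *m diag_mx gamma *m sinv (eta s)) + p) (fun _ => 0).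
      apply: hd_ext Hphi _ => s Is.
      by rewrite addr0 GP_expand BL_BS_zero ?oppr0 //; exact: Hunit.
    by rewrite (hd_const Hphi0 It) /= addrC.
Qed.
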